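(* Let $u \in \mathbb{N}$ and let $\mathrm{HFS}_u$ denote the universe of hereditarily finite sets with urelements $0,1,\dots,u-1$. Define $f_u : \mathrm{HFS}_u \to \mathbb{N}$ recursively by $f_u(x) = x$ if $x$ is an urelement (i.e. $x \in \{0,\dots,u-1\}$), and $f_u(x) = u + \sum_{a \in x} 2^{f_u(a)}$ if $x$ is a set. Then $f_u$ is a bijection between $\mathrm{HFS}_u$ and $\mathbb{N}$.
   Context: Urelements are objects having no elements, distinct from all sets; here the $u$ urelements are identified with the natural numbers $0,1,\dots,u-1$. $\mathrm{HFS}_u$ is the smallest collection containing these urelements and containing every finite set (possibly empty) all of whose elements belong to $\mathrm{HFS}_u$. For $u=0$ there are no urelements and $\mathrm{HFS}_0$ is the universe of pure hereditarily finite sets, with $f_0$ being Ackermann's encoding $f(x)=\sum_{a\in x}2^{f(a)}$ (so $f(\emptyset)=0$). $\mathbb{N}=\{0,1,2,\dots\}$. *)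

(* Defs.v *)
From mathcomp Require Import all_boot.
Set Implicit Arguments. Unset Strict Implicit. Unset Printing Implicit Defensive.

(* Raw syntax of hereditarily finite sets with urelements:
   [Ur n] is the urelement n, [HSet s] is the set whose elements are
   (the values of) the members of the finite list [s]. *)
Inductive hf : Type :=
| Ur of nat
| HSet of seq hf.

Fixpoint hf_eqb (x y : hf) {struct x} : bool :=
  match x, y with
  | Ur m, Ur n => m == n
  | HSet s, HSet t =>
      all (fun a => has (fun b => hf_eqb a b) t) s &&
      all (fun b => has (fun a => hf_eqb a b) s) t
  | _, _ => false
  end.

(* x is an element of HFS_u: all urelements occurring in x are < u. *)
Fixpoint hf_wf (u : nat) (x : hf) : bool :=
  match x with
  | Ur n => n < u
  | HSet s => all (hf_wf u) s
  end.

(* f_u(x) = x for an urelement, and u + sum_{a in x} 2^{f_u(a)} for a set,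
   where the sum ranges over the DISTINCT elements of x (each extensional
   equality class among the listed members is counted once). *)
Fixpoint f_hf (u : nat) (x : hf) {struct x} : nat :=
  match x with
  | Ur n => n
  | HSet s =>
      let fix go (l seen : seq hf) : nat :=
        match l with
        | [::] => 0
        | a :: l' =>
            (if has (hf_eqb a) seen then 0 else 2 ^ f_hf u a) + go l' (a :: seen)
        end
      in u + go s [::]
  end.

(* Main.v *)
Require Import Defs.
From mathcomp Require Import all_boot zify.

Definition S2 (r : seq nat) := \sum_(v <- r) 2 ^ v.

Lemma split_sum N r : uniq r ->
  S2 r = (N \in r) * 2 ^ N + S2 (filter (predC1 N) r).
Proof.
move=> ur; rewrite /S2; case: (boolP (N \in r)) => H.
  by rewrite (perm_big _ (perm_to_rem H)) big_cons rem_filter // mul1n.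
rewrite mul0n add0n; congr bigop; symmetry; apply/all_filterP.
apply/allP => v vr /=; apply/negP => /eqP E; by rewrite -E vr in H.
Qed.

Lemma sum_lt {N r} : uniq r -> all (fun v => v < N) r -> S2 r < 2 ^ N.
Proof.
move=> ur ar; elim: N r ur ar => [|N IH] r ur ar.
  by case: r ur ar => [|a s] // _ _; rewrite /S2 big_nil.
rewrite (split_sum N) //.
have h : S2 (filter (predC1 N) r) < 2 ^ N.
  apply: IH; first by rewrite filter_uniq.
  apply/allP => v; rewrite mem_filter /= => /andP [vN vr].
  have := allP ar v vr => /= ; rewrite ltnS leq_eqVlt (negbTE vN) //.
rewrite expnS; case: (N \in r); rewrite ?mul1n ?mul0n; move: h; set X := 2 ^ N; set Y := S2 _; lia.
Qed.

Lemma mem_lt_sum r v : uniq r -> v \in r -> v < S2 r.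
Proof.
move=> ur vr; rewrite (split_sum v) // vr mul1n.
have := ltn_expl v (isT : 1 < 2); lia.
Qed.

Lemma sum_inj N r1 r2 : uniq r1 -> uniq r2 -> all (fun v => v < N) r1 ->
  all (fun v => v < N) r2 -> S2 r1 = S2 r2 -> r1 =i r2.
Proof.
elim: N r1 r2 => [|N IH] r1 r2 u1 u2 a1 a2 E.
  have -> : r1 = [::] by case: r1 {u1 E} a1 => [|x s].
  have -> : r2 = [::] by case: r2 {u2 E} a2 => [|x s].
  by [].
have sub : forall r, uniq r -> all (fun v => v < N.+1) r ->
   uniq (filter (predC1 N) r) /\ all (fun v => v < N) (filter (predC1 N) r).
  move=> r ur ar; split; first by rewrite filter_uniq.
  apply/allP => v; rewrite mem_filter /= => /andP [vN vr].
  have := allP ar v vr => /= ; rewrite ltnS leq_eqVlt (negbTE vN) //.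
have [f1 g1] := sub _ u1 a1; have [f2 g2] := sub _ u2 a2.
have l1 := sum_lt f1 g1; have l2 := sum_lt f2 g2.
move: E; rewrite (split_sum N r1) // (split_sum N r2) // => E.
have e : (N \in r1) = (N \in r2) /\ S2 (filter (predC1 N) r1) = S2 (filter (predC1 N) r2).
  move: l1 l2 E; set X := 2 ^ N; set A := S2 _; set B := S2 _.
  case: (N \in r1); case: (N \in r2); rewrite ?mul1n ?mul0n; lia.
case: e => e1 e2.
have IHe := IH _ _ f1 f2 g1 g2 e2.
move=> x; case: (eqVneq x N) => [->|xN] //.
have := IHe x; rewrite !mem_filter /= xN //.
Qed.

Lemma binrep m : exists r, uniq r /\ S2 r = m.
Proof.
elim/ltn_ind: m => m IH.
case: m IH => [|m] IH; first by exists [::]; rewrite /S2 big_nil.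
have lt : m.+1./2 < m.+1.
  have := odd_double_half m.+1; rewrite -muln2; case: (odd m.+1) => /=; lia.
have [r [ur sr]] := IH _ lt.
have sm : S2 (map succn r) = (m.+1./2).*2.
  rewrite /S2 big_map -sr /S2 -muln2 big_distrl /=; apply: eq_bigr => i _.
  by rewrite expnS mulnC.
have um : uniq (map succn r) by rewrite map_inj_uniq //; move=> a b [].
have := odd_double_half m.+1; case: (odd m.+1) => /= E.
  exists (0 :: map succn r); split.
    by rewrite /= um andbT; apply/negP => /mapP [x _].
  by rewrite /S2 big_cons -/(S2 _) sm expn0 -[RHS]E.
exists (map succn r); split => //; by rewrite sm -[RHS]E.
Qed.

Section U.
Variable u : nat.
Local Notation f := (f_hf u).

Fixpoint go (l seen : seq hf) : nat :=
  match l with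
  | [::] => 0
  | a :: l' => (if has (hf_eqb a) seen then 0 else 2 ^ f a) + go l' (a :: seen)
  end.

Lemma has_ext (T : Type) (P a1 a2 : pred T) s :
  all P s -> (forall b, P b -> a1 b = a2 b) -> has a1 s = has a2 s.
Proof. by move=> + h; elim: s => //= b s IH /andP [Pb Ps]; rewrite h // IH. Qed.

Lemma all_ext (T : Type) (P a1 a2 : pred T) s :
  all P s -> (forall b, P b -> a1 b = a2 b) -> all a1 s = all a2 s.
Proof. by move=> + h; elim: s => //= b s IH /andP [Pb Ps]; rewrite h // IH. Qed.

Lemma fset s : f (HSet s) = u + go s [::].
Proof. by []. Qed.

Lemma go_char (P : pred hf)
  (HP : forall a b, P a -> P b -> hf_eqb a b = (f a == f b)) l seen :
  all P l -> all P seen ->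
  go l seen = \sum_(v <- undup (map f l) | v \notin map f seen) 2 ^ v.
Proof.
elim: l seen => [|a l IH] seen /= Pl Ps; first by rewrite big_nil.
case/andP: Pl => Pa Pl.
have Hh : has (hf_eqb a) seen = (f a \in map f seen).
  rewrite -has_pred1 has_map; rewrite (@has_ext _ P _ (fun b => f b == f a) seen Ps) //.
  by move=> b Pb; rewrite HP // eq_sym.
rewrite Hh IH //= ?Pa ?Ps //.
set S := map f seen; set U := undup (map f l).
have uU : uniq U by apply: undup_uniq.
case: (boolP (f a \in map f l)) => Ha.
  have HaU : f a \in U by rewrite mem_undup.
  rewrite [RHS]big_mkcond (bigD1_seq (f a)) //= [in RHS]big_mkcond /=.
  congr addn; first by case: (f a \in S).
  rewrite [LHS]big_mkcond; apply: eq_bigr => v _.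
  by rewrite in_cons negb_or; case: (v == f a); case: (v \in S).
rewrite big_cons.
have E : \sum_(v <- U | v \notin f a :: S) 2 ^ v = \sum_(v <- U | v \notin S) 2 ^ v.
  rewrite big_mkcond [RHS]big_mkcond; apply: eq_big_seq => v vU.
  rewrite in_cons negb_or.
  have -> : (v != f a) by apply/eqP => e; rewrite -e -mem_undup vU in Ha.
  by [].
by rewrite E; case: (f a \in S).
Qed.

Lemma go_char0 (P : pred hf)
  (HP : forall a b, P a -> P b -> hf_eqb a b = (f a == f b)) l :
  all P l -> go l [::] = S2 (undup (map f l)).
Proof.
move=> Pl; rewrite (@go_char P HP) //; rewrite /S2.
Qed.

Fixpoint depth (x : hf) : nat :=
  match x with
  | Ur _ => 0
  | HSet s => ((fix dl (l : seq hf) : nat :=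
      match l with [::] => 0 | a :: l' => maxn (depth a) (dl l') end) s).+1
  end.

Lemma depth_cons a s : depth (HSet (a :: s)) = maxn (depth a).+1 (depth (HSet s)).
Proof. by rewrite /= maxnSS. Qed.

Lemma depth_all s : all (fun a => depth a < depth (HSet s)) s.
Proof.
elim: s => [|a s IH] //; rewrite depth_cons /= leq_maxl /=.
apply: sub_all IH => b /= h; apply: leq_trans h (leq_maxr _ _).
Qed.

Lemma elems_P n s : depth (HSet s) <= n.+1 -> all (hf_wf u) s ->
  all (fun a => (depth a <= n) && hf_wf u a) s.
Proof.
elim: s => [|a s IH] //; rewrite depth_cons geq_max => /andP [da ds] /andP [wa ws].
by rewrite /= -ltnS da wa /=; apply: IH.
Qed.


Lemma key n : forall x y, depth x <= n -> depth y <= n -> hf_wf u x -> hf_wf u y ->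
  hf_eqb x y = (f x == f y).
Proof.
elim: n => [|n IH] [m|s] [k|t] //.
- move=> _ _ mu _; apply/esym/negbTE; rewrite fset; move: mu => /= mu; lia.
- move=> _ _ _ mu; apply/esym/negbTE; rewrite fset; move: mu => /= mu; lia.
move=> ds dt ws wt.
pose P := fun a => (depth a <= n) && hf_wf u a.
have HP : forall a b, P a -> P b -> hf_eqb a b = (f a == f b).
  by move=> a b /andP [? ?] /andP [? ?]; apply: IH.
have Ps : all P s by apply: elems_P.
have Pt : all P t by apply: elems_P.
rewrite !fset (@go_char0 P HP s Ps) (@go_char0 P HP t Pt) eqn_add2l.
have conv : forall s1 s2, all P s1 -> all P s2 ->
    all (fun a => has (fun b => hf_eqb a b) s2) s1 = all (mem (map f s2)) (map f s1).
  move=> s1 s2 P1 P2; rewrite all_map.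
  rewrite (@all_ext _ P _ (fun a => f a \in map f s2) s1 P1) //.
  move=> a Pa; rewrite -has_pred1 has_map.
  rewrite (@has_ext _ P _ (fun b => f b == f a) s2 P2) //.
  by move=> b Pb; rewrite HP // eq_sym.
have conv' : forall s1 s2, all P s1 -> all P s2 ->
    all (fun b => has (fun a => hf_eqb a b) s1) s2 = all (mem (map f s1)) (map f s2).
  move=> s1 s2 P1 P2; rewrite all_map.
  rewrite (@all_ext _ P _ (fun a => f a \in map f s1) s2 P2) //.
  move=> a Pa; rewrite -has_pred1 has_map.
  rewrite (@has_ext _ P _ (fun b => f b == f a) s1 P1) //.
  by move=> b Pb; rewrite HP.
rewrite /hf_eqb -/hf_eqb (conv _ _ Ps Pt) (conv' _ _ Ps Pt).
set r1 := undup (map f s); set r2 := undup (map f t).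
have u1 : uniq r1 by apply: undup_uniq.
have u2 : uniq r2 by apply: undup_uniq.
apply/idP/idP.
  case/andP => /allP h1 /allP h2.
  have e : r1 =i r2.
    move=> v; rewrite !mem_undup; apply/idP/idP => [/h1|/h2] //.
  by rewrite /S2 (perm_big _ (uniq_perm u1 u2 e)).
move/eqP => E.
have A1 : all (fun v => v < S2 r1) r1.
  by apply/allP => v vr; apply: mem_lt_sum.
have A2 : all (fun v => v < S2 r1) r2.
  by apply/allP => v vr; rewrite E; apply: mem_lt_sum.
have e := @sum_inj (S2 r1) r1 r2 u1 u2 A1 A2 E.
have e' : map f s =i map f t by move=> x; have := e x; rewrite /r1 /r2 !mem_undup.
by apply/andP; split; apply/allP => v; rewrite /= e'.
Qed.

End U.

Lemma keyw u x y : hf_wf u x -> hf_wf u y -> hf_eqb x y = (f_hf u x == f_hf u y).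
Proof.
move=> wx wy; exact: (@key u (maxn (depth x) (depth y)) x y (leq_maxl _ _) (leq_maxr _ _) wx wy).
Qed.

Lemma lift u r : (forall v, v \in r -> exists x, hf_wf u x /\ f_hf u x = v) ->
  exists s, all (hf_wf u) s /\ map (f_hf u) s = r.
Proof.
elim: r => [|v r IH] H; first by exists [::].
have [x [wx fx]] := H v (mem_head _ _).
have [s [ws ms]] : exists s, all (hf_wf u) s /\ map (f_hf u) s = r.
  by apply: IH => w wr; apply: H; rewrite in_cons wr orbT.
by exists (x :: s); rewrite /= wx ws fx ms.
Qed.

Theorem mainTheorem1 (u : nat) :
  (forall x y : hf, hf_wf u x -> hf_wf u y -> hf_eqb x y -> f_hf u x = f_hf u y) /\
  (forall x y : hf, hf_wf u x -> hf_wf u y -> f_hf u x = f_hf u y -> hf_eqb x y) /\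
  (forall n : nat, exists x : hf, hf_wf u x /\ f_hf u x = n).
Proof.
split; [|split].
- by move=> x y wx wy; rewrite (@keyw u x y wx wy) => /eqP.
- by move=> x y wx wy E; rewrite (@keyw u x y wx wy) E.
elim/ltn_ind => n IH.
case: (ltnP n u) => [nu|un]; first by exists (Ur n).
have [r [ur sr]] := binrep (n - u).
have [s [ws ms]] : exists s, all (hf_wf u) s /\ map (f_hf u) s = r.
  apply: lift => v vr; apply: IH.
  have := @mem_lt_sum r v ur vr; rewrite sr; lia.
exists (HSet s); split => //.
have HP : forall a b, hf_wf u a -> hf_wf u b -> hf_eqb a b = (f_hf u a == f_hf u b).
  by move=> a b; apply: keyw.
rewrite fset (@go_char0 u (hf_wf u) HP s ws) ms undup_id // sr; lia.
Qed.
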